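(* Let $N\ge1$ and suppose the parameter space $\Theta$ of the correlated Bernoulli random graph model satisfies: (a) $\Theta$ is nondegenerate; (b) edge correlations are component-uniform, i.e. there is a function $\varrho_E:\Theta\to\mathbb{R}$ such that for all $\theta\in\Theta$ and all $i=1,\dots,N$, $\varrho_i(\theta)=\varrho_E(\theta)$; (c) $\Theta\not\subseteq\mathcal{R}^o$, i.e. there exists $\theta\in\Theta$ with $\varrho_E(\theta)\neq0$. Then there does not exist an unbiased estimator of $\varrho_E$, i.e. no statistic $S:\mathcal{X}\to\mathbb{R}$ satisfies $\mathbb{E}_\theta(S)=\varrho_E(\theta)$ for all $\theta\in\Theta$.
   Context: Correlated Bernoulli random graph model: fix a positive integer $N$ and let $\mathcal{R}=\{(p_1,\dots,p_N,\varrho_1,\dots,\varrho_N): p_i,\varrho_i\in[0,1]\}$; a parameter space is any $\Theta\subseteq\mathcal{R}$, and $\varrho_i(\theta)$ denotes the $(N+i)$th coordinate of $\theta$. For $\theta\in\Theta$, the pairs $(X_i,Y_i)$, $i=1,\dots,N$, of $\{0,1\}$-valued random variables are independent, $X_i,Y_i$ are marginally Bernoulli$(p_i)$ with Pearson correlation $\varrho_i$ (so $\mathbb{P}(X_i=Y_i=1)=p_i^2+\varrho_ip_i(1-p_i)$, $\mathbb{P}(X_i=Y_i=0)=(1-p_i)^2+\varrho_ip_i(1-p_i)$, $\mathbb{P}(X_i=1,Y_i=0)=\mathbb{P}(X_i=0,Y_i=1)=(1-\varrho_i)p_i(1-p_i)$). Sample space $\mathcal{X}=\{(x,y):x,y\in\{0,1\}^N\}$.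 Let $\mathcal{R}^o=\{(p_1,\dots,p_N,0,\dots,0):p_i\in\mathbb{R}\}$; $\Theta$ is nondegenerate if $\Theta\cap\mathcal{R}^o$ has an interior point relative to $\mathcal{R}^o$, i.e. there exist $z\in\Theta\cap\mathcal{R}^o$ and $\epsilon>0$ such that every point of $\mathcal{R}^o$ within distance $\epsilon$ of $z$ lies in $\Theta$. *)

(* Defs.v *)
(* over an abstract R : rcfType (real closed field; the reals
   are an instance). *)
From mathcomp Require Import all_boot all_order all_algebra.
Set Implicit Arguments. Unset Strict Implicit. Unset Printing Implicit Defensive.
Import Order.TTheory GRing.Theory Num.Theory.
Local Open Scope ring_scope.

(* A parameter theta = (p_1..p_N, rho_1..rho_N) is a pair of functions. *)
Definition param (R : Type) (N : nat) : Type := (('I_N -> R) * ('I_N -> R))%type.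

Definition in_calR (R : realDomainType) N (th : param R N) : Prop :=
  forall i, (0 <= th.1 i <= 1) /\ (0 <= th.2 i <= 1).

Definition in_calRo (R : realDomainType) N (th : param R N) : Prop :=
  forall i, th.2 i = 0.

Definition pdist (R : rcfType) N (a b : param R N) : R :=
  Num.sqrt (\sum_(i < N) ((a.1 i - b.1 i) ^+ 2 + (a.2 i - b.2 i) ^+ 2)).

Definition param_nondegenerate (R : rcfType) N (Theta : param R N -> Prop) : Prop :=
  exists z : param R N, Theta z /\ in_calRo z /\
    exists eps : R, 0 < eps /\
      forall w : param R N, in_calRo w -> pdist w z < eps -> Theta w.

(* joint law of one pair (X_i, Y_i) *)
Definition pairprob (R : ringType) (p rho : R) (a b : bool) : R :=
  match a, b with
  | true, true => p ^+ 2 + rho * p * (1 - p)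
  | false, false => (1 - p) ^+ 2 + rho * p * (1 - p)
  | _, _ => (1 - rho) * p * (1 - p)
  end.

Definition sample (N : nat) : finType :=
  ({ffun 'I_N -> bool} * {ffun 'I_N -> bool})%type.

Definition prob (R : comRingType) N (th : param R N) (s : sample N) : R :=
  \prod_(i < N) pairprob (th.1 i) (th.2 i) (s.1 i) (s.2 i).

Definition expect (R : comRingType) N (th : param R N) (S : sample N -> R) : R :=
  \sum_(s : sample N) S s * prob th s.

(* Main.v *)
Require Import Defs.
From mathcomp Require Import all_boot all_order all_algebra ring lra.
Import Order.TTheory GRing.Theory Num.Theory.
Local Open Scope ring_scope.

Section S.
Variable R : rcfType.
Definition ell (x0 x1 x2 y : R) := (y - x1) * (y - x2) / ((x0 - x1) * (x0 - x2)).

Lemma lagr (x0 x1 x2 y A B C : R) : x0 - x1 != 0 -> x0 - x2 != 0 -> x1 - x2 != 0 ->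
  ell x0 x1 x2 y * (A + B * x0 + C * x0 ^+ 2) + ell x1 x2 x0 y * (A + B * x1 + C * x1 ^+ 2)
  + ell x2 x0 x1 y * (A + B * x2 + C * x2 ^+ 2) = A + B * y + C * y ^+ 2.
Proof.
move=> h01 h02 h12.
have h10 : x1 - x0 != 0 by rewrite -opprB oppr_eq0.
have h20 : x2 - x0 != 0 by rewrite -opprB oppr_eq0.
have h21 : x2 - x1 != 0 by rewrite -opprB oppr_eq0.
rewrite /ell.
field.
by rewrite h01 h02 h12 h10 h20 h21.
Qed.

Definition lamg (a b c x0 x1 x2 : R) :=
  a * ell x0 x1 x2 1 + b * ell x0 x1 x2 0 + c * (4 * ell x0 x1 x2 (2^-1) - ell x0 x1 x2 0 - ell x0 x1 x2 1).

Lemma comb_gen (a b c x0 x1 x2 A B C : R) : x0 - x1 != 0 -> x0 - x2 != 0 -> x1 - x2 != 0 ->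
  lamg a b c x0 x1 x2 * (A + B * x0 + C * x0 ^+ 2) + lamg a b c x1 x2 x0 * (A + B * x1 + C * x1 ^+ 2)
  + lamg a b c x2 x0 x1 * (A + B * x2 + C * x2 ^+ 2) = a * (A + B + C) + b * A + c * (2 * A + B).
Proof.
move=> h01 h02 h12.
have h10 : x1 - x0 != 0 by rewrite -opprB oppr_eq0.
have h20 : x2 - x0 != 0 by rewrite -opprB oppr_eq0.
have h21 : x2 - x1 != 0 by rewrite -opprB oppr_eq0.
have L y := @lagr x0 x1 x2 y A B C h01 h02 h12.
set g0 := (A + B * x0 + C * x0 ^+ 2) in L *.
set g1 := (A + B * x1 + C * x1 ^+ 2) in L *.
set g2 := (A + B * x2 + C * x2 ^+ 2) in L *.
rewrite /lamg.
transitivity (a * (ell x0 x1 x2 1 * g0 + ell x1 x2 x0 1 * g1 + ell x2 x0 x1 1 * g2)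
  + b * (ell x0 x1 x2 0 * g0 + ell x1 x2 x0 0 * g1 + ell x2 x0 x1 0 * g2)
  + c * (4 * (ell x0 x1 x2 (2^-1) * g0 + ell x1 x2 x0 (2^-1) * g1 + ell x2 x0 x1 (2^-1) * g2)
         - (ell x0 x1 x2 0 * g0 + ell x1 x2 x0 0 * g1 + ell x2 x0 x1 0 * g2)
         - (ell x0 x1 x2 1 * g0 + ell x1 x2 x0 1 * g1 + ell x2 x0 x1 1 * g2))).
  by ring.
rewrite !L.
have h2 : (2:R) != 0 by rewrite pnatr_eq0.
field.
done.
Qed.

Lemma comb (p r x0 x1 x2 : R) u v : x0 - x1 != 0 -> x0 - x2 != 0 -> x1 - x2 != 0 ->
  let a := p ^+ 2 + r * p * (1 - p) in
  let b := (1 - p) ^+ 2 + r * p * (1 - p) in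
  let c := (1 - r) * p * (1 - p) in
  pairprob p r u v = lamg a b c x0 x1 x2 * pairprob x0 0 u v
     + lamg a b c x1 x2 x0 * pairprob x1 0 u v + lamg a b c x2 x0 x1 * pairprob x2 0 u v.
Proof.
move=> h01 h02 h12 a b c.
have E (x : R) u' v' : pairprob x 0 u' v' =
   (if u' && v' then 0 else if ~~ u' && ~~ v' then 1 else 0)
 + (if u' && v' then 0 else if ~~ u' && ~~ v' then -2 else 1) * x
 + (if u' && v' then 1 else if ~~ u' && ~~ v' then 1 else -1) * x ^+ 2.
  by case: u'; case: v' => /=; ring.
rewrite !E comb_gen //.
by case: u; case: v => /=; rewrite /a /b /c; ring.
Qed.
End S.
Arguments lamg {R}.
Arguments ell {R}.

Section Main.
Variable R : rcfType.
Variable N : nat.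

Definition upd (th : param R N) (k : 'I_N) (p r : R) : param R N :=
  (fun i => if i == k then p else th.1 i, fun i => if i == k then r else th.2 i).

Definition rest (th : param R N) (k : 'I_N) (s : sample N) : R :=
  \prod_(i < N | i != k) pairprob (th.1 i) (th.2 i) (s.1 i) (s.2 i).

Lemma prob_split th k s :
  prob th s = pairprob (th.1 k) (th.2 k) (s.1 k) (s.2 k) * rest th k s.
Proof. by rewrite /prob (bigD1 k). Qed.

Lemma prob_upd th k p r s :
  prob (upd th k p r) s = pairprob p r (s.1 k) (s.2 k) * rest th k s.
Proof.
rewrite /prob (bigD1 k) //= eqxx; congr (_ * _).
by apply: eq_bigr => i /negbTE ->.
Qed.

Lemma expect_comb th k (S : sample N -> R) (x0 x1 x2 : R) :
  x0 - x1 != 0 -> x0 - x2 != 0 -> x1 - x2 != 0 ->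
  let p := th.1 k in let r := th.2 k in
  let a := p ^+ 2 + r * p * (1 - p) in
  let b := (1 - p) ^+ 2 + r * p * (1 - p) in
  let c := (1 - r) * p * (1 - p) in
  expect th S = lamg a b c x0 x1 x2 * expect (upd th k x0 0) S
     + lamg a b c x1 x2 x0 * expect (upd th k x1 0) S
     + lamg a b c x2 x0 x1 * expect (upd th k x2 0) S.
Proof.
move=> h01 h02 h12 p r a b c.
rewrite /expect !mulr_sumr -!big_split; apply: eq_bigr => s _ /=.
rewrite (prob_split th k) !prob_upd (@comb R (th.1 k) (th.2 k) x0 x1 x2 (s.1 k) (s.2 k) h01 h02 h12).
rewrite /a /b /c /p /r.
ring.
Qed.
End Main.
Arguments upd {R N}.
Arguments rest {R N}.

Theorem theorem6 (R : rcfType) (N : nat) (Theta : param R N -> Prop)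
  (rhoE : param R N -> R) :
  (0 < N)%N ->
  (forall th, Theta th -> in_calR th) ->
  param_nondegenerate Theta ->
  (forall th, Theta th -> forall i : 'I_N, th.2 i = rhoE th) ->
  (exists th, Theta th /\ rhoE th <> 0) ->
  ~ (exists S : sample N -> R, forall th, Theta th -> expect th S = rhoE th).
Proof.
move=> N0 _ [z [Tz [Rz [eps [eps0 Hball]]]]] Hrho [ths [Tths rhs0]] [S HS].
pose i0 : 'I_N := Ordinal N0.
pose n : R := N%:R.
have n1 : 1 <= n by rewrite /n ler1n.
pose h := eps / (2 * n).
have epsh : eps = 2 * n * h.
  have nz : n != 0 by apply/eqP => n0; rewrite n0 in n1; lra.
  have t2 : (2:R) != 0 by rewrite pnatr_eq0.
  by rewrite /h; field; rewrite ?nz ?t2 ?mulf_neq0.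
have h0 : 0 < h by nra.
pose P (x zx : R) := x = zx \/ x = zx + h \/ x = zx - h.
have base : forall th : param R N, (forall i, th.2 i = 0 /\ P (th.1 i) (z.1 i)) ->
    expect th S = 0.
  move=> th Hth.
  have Ro : in_calRo th by move=> i; case: (Hth i).
  have Tth : Theta th.
    apply: Hball => //.
    rewrite /pdist -(ger0_norm (ltW eps0)) -sqrtr_sqr ltr_sqrt; last first.
      by rewrite exprn_gt0.
    apply: (@le_lt_trans _ _ (\sum_(i < N) h ^+ 2)).
      apply: ler_sum => i _; rewrite Rz; case: (Hth i) => -> [|[|]] ->; nra.
    rewrite sumr_const card_ord -mulr_natr -/n epsh.
    have hh : 0 < h ^+ 2 by rewrite exprn_gt0.
    nra.
  by rewrite HS // -(Hrho th Tth i0) Ro.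
have step : forall m, forall th : param R N,
    (forall i : 'I_N, (m <= i)%N -> th.2 i = 0 /\ P (th.1 i) (z.1 i)) -> expect th S = 0.
  elim=> [|m IH] th Hth.
    by apply: base => i; apply: Hth.
  case: (ltnP m N) => [mN|Nm]; last first.
    apply: IH => i Hi; exfalso; move: (ltn_ord i); rewrite ltnNge.
    by rewrite (leq_trans Nm Hi).
  pose k : 'I_N := Ordinal mN.
  have hA : z.1 k - (z.1 k + h) != 0 by apply/eqP; lra.
  have hB : z.1 k - (z.1 k - h) != 0 by apply/eqP; lra.
  have hC : z.1 k + h - (z.1 k - h) != 0 by apply/eqP; lra.
  rewrite (@expect_comb R N th k S _ _ _ hA hB hC).
  have U x : P x (z.1 k) -> expect (upd th k x 0) S = 0.
    move=> Px; apply: IH => i Hi /=.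
    case: eqP => [->|ne]; first by split.
    apply: Hth; rewrite ltn_neqAle Hi andbT.
    by apply/eqP => E; apply: ne; apply: val_inj.
  rewrite !U /P; [|lra|lra|lra].
  by rewrite !mulr0 !addr0.
apply: rhs0; rewrite -(HS ths Tths); apply: (step N) => i Hi.
by exfalso; move: (ltn_ord i); rewrite ltnNge Hi.
Qed.
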